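(* Let $L$ be a second-order linear partial differential operator in $\mathbb{R}^n$ with decomposable principal symbol, and suppose $L = X_1X_2 - H$ with first-order operators $X_1, X_2, H$ such that $[H,X_2] = \varkappa H + \varrho X_2$ for some functions $\varkappa,\varrho\in\mathbf{F}$ (i.e. $L$ admits the Dini transformation with resulting operator $L_{Dini} = X_2X_1 - H + \varkappa X_1 + \varrho$). Then there exists a function $\alpha\in\mathbf{F}$ such that, writing $L = (X_1+\alpha)X_2 - (H+\alpha X_2) = \widetilde{X}_1X_2 - \widetilde{H}$, one has $[\widetilde{H},X_2] = \psi\widetilde{H}$ with $\psi=\varkappa$, so that $L$ admits the Intertwining Laplace Transformation (with $\omega=\psi$) whose resulting operator is $L_1 = X_2\widetilde{X}_1 + \psi\widetilde{X}_1 - \widetilde{H} = L_{Dini}$.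
   Context: $\mathbf{F}$ is a differentially closed field of functions of $x_1,\ldots,x_n$; operators have coefficients in $\mathbf{F}$; $[A,B]=AB-BA$. An Intertwining Laplace Transformation of $L = X_1X_2 - H$ ($H\ne0$) is defined when $\omega=-[X_2,H]H^{-1}$ (computed in the skew Ore field of fractions of the operator ring) is a differential operator, and it produces $L_1 = X_2X_1+\omega X_1 - H$. Decomposable principal symbol means the principal symbol is a product of two polynomials linear in the symbol variables. *)

(* Defs.v *)
From HB Require Import structures.
From mathcomp Require Import all_boot all_order all_algebra.
From mathcomp Require Import mpoly.
Set Implicit Arguments.
Unset Strict Implicit.
Unset Printing Implicit Defensive.
Import Order.TTheory GRing.Theory.
Local Open Scope ring_scope.

(* (D i plays the role of d/dx_{i+1}).                                 *)
Section DiffField.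
Context {n : nat} {F : fieldType}.

Definition diff_field (D : 'I_n -> F -> F) : Prop :=
  [/\ forall i a b, D i (a + b) = D i a + D i b,
      forall i a b, D i (a * b) = D i a * b + a * D i b &
      forall i j a, D i (D j a) = D j (D i a)].

Definition dpow (D : 'I_n -> F -> F) (m : 'X_{1..n}) (a : F) : F :=
  foldr (fun i x => iter (m i) (D i) x) a (enum 'I_n).
End DiffField.

Definition diff_ext {n : nat} {F K : fieldType} (D : 'I_n -> F -> F)
  (DK : 'I_n -> K -> K) (iota : {rmorphism F -> K}) : Prop :=
  diff_field DK /\ forall i a, iota (D i a) = DK i (iota a).

(* A finite system of differential polynomial equations [ps = 0] and
   inequations [qs <> 0] in k differential unknowns y_0..y_(k-1) with
   coefficients in F: it is written with s algebraic variables, the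
   variable j standing for the derivative  d^((v j).2) y_((v j).1).
   [dsol DK iota v ps qs u] : u solves it in the extension K. *)
Definition dsol {n k s : nat} {F K : fieldType} (DK : 'I_n -> K -> K)
  (iota : F -> K) (v : 'I_s -> 'I_k * 'X_{1..n})
  (ps qs : seq {mpoly F[s]}) (u : 'I_k -> K) : Prop :=
  let val_ j := dpow DK (v j).2 (u (v j).1) in
  (forall p, p \in ps -> (map_mpoly iota p).@[val_] = 0) /\
  (forall q, q \in qs -> (map_mpoly iota q).@[val_] != 0).

(* Kolchin's definition: (F, D) is differentially closed if every finite
   system of differential polynomial equations and inequations over F
   having a solution in some differential field extension of F already
   has a solution in F. *)
Definition diff_closed {n : nat} {F : fieldType} (D : 'I_n -> F -> F) : Prop :=
  forall (k s : nat) (v : 'I_s -> 'I_k * 'X_{1..n}) (ps qs : seq {mpoly F[s]}),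
    (exists (K : fieldType) (DK : 'I_n -> K -> K) (iota : {rmorphism F -> K})
            (u : 'I_k -> K), diff_ext D DK iota /\ dsol DK iota v ps qs u) ->
    exists u : 'I_k -> F, dsol D id v ps qs u.

(* Linear differential operators with coefficients in F, in n         *)
(* variables.  An operator  sum_m a_m d^m  is stored as the polynomial *)
(* sum_m a_m 'X_[m] : {mpoly F[n]} (so addition, subtraction, left     *)
(* multiplication by a function  a  ( = a *: P ), functions a%:MP and  *)
(* the symbol calculus are those of mpoly); the composition of         *)
(* operators is given by the Leibniz rule                              *)
(*   (a d^m)(b d^m') = sum_(d <= m) C(m,d) a d^d(b) d^(m-d+m').        *)
Section Operators.
Context {n : nat} {F : fieldType} (D : 'I_n -> F -> F).

Definition opmul (P Q : {mpoly F[n]}) : {mpoly F[n]} :=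
  \sum_(m <- msupp P) \sum_(m' <- msupp Q)
    \sum_(d : 'X_{1..n < (mdeg m).+1} | (val d <= m)%MM)
      ((\prod_(i < n) 'C(m i, val d i))%:R * P@_m * dpow D (val d) Q@_m')
        *: 'X_[(m - val d + m')%MM].

Definition opcomm (A B : {mpoly F[n]}) : {mpoly F[n]} :=
  opmul A B - opmul B A.

(* order of an operator (the order of 0 is taken to be 0) *)
Definition op_order (P : {mpoly F[n]}) : nat := (msize P).-1.

Definition first_order (P : {mpoly F[n]}) : Prop := (msize P <= 2)%N.

Definition principal_symbol (P : {mpoly F[n]}) : {mpoly F[n]} :=
  \sum_(m <- msupp P | mdeg m == op_order P) P@_m *: 'X_[m].

Definition decomposable_symbol (P : {mpoly F[n]}) : Prop :=
  exists p q : {mpoly F[n]},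
    [/\ (msize p <= 2)%N, (msize q <= 2)%N & principal_symbol P = p * q].

Definition admits_Dini (X2 H : {mpoly F[n]}) (kappa rho : F) : Prop :=
  opcomm H X2 = kappa *: H + rho *: X2.

Definition Dini_result (X1 X2 H : {mpoly F[n]}) (kappa rho : F) : {mpoly F[n]} :=
  opmul X2 X1 - H + kappa *: X1 + rho%:MP.

(* L = X1 X2 - H admits the Intertwining Laplace Transformation with
   omega = -[X2, H] H^{-1} equal to the differential operator w:
   H <> 0 and, in the (domain) operator ring,  w H = -[X2, H]. *)
Definition ILT_with (X2 H w : {mpoly F[n]}) : Prop :=
  H != 0 /\ opmul w H = - opcomm X2 H.

Definition ILT_result (X1 X2 H w : {mpoly F[n]}) : {mpoly F[n]} :=
  opmul X2 X1 + opmul w X1 - H.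
End Operators.

(* Main.v *)
Require Import Defs.
From HB Require Import structures.
From mathcomp Require Import all_boot all_order all_algebra.
From mathcomp Require Import mpoly.
From mathcomp Require Import boolp generic_quotient fraction.
From mathcomp Require Import ring.
Set Implicit Arguments.
Unset Strict Implicit.
Unset Printing Implicit Defensive.
Import GRing.Theory.
Local Open Scope ring_scope.

Local Open Scope quotient_scope.

Section FracRep.
Variable R : idomainType.
Lemma frac_rep (x : {fraction R}) :
  exists p q : R, q != 0 /\ x = tofrac p / tofrac q.
Proof.
elim/quotW: x => r.
exists (r.1), (r.2); split; first exact: denom_ratioP.
have hq : tofrac r.2 != 0 by rewrite tofrac_eq0 denom_ratioP.
apply: (mulIf hq); rewrite mulfVK //.
unlock tofrac.
rewrite -[_ * _]FracField.pi_mul.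
apply/eqmodP => /=. rewrite FracField.equivfE /FracField.mulf /=.
rewrite !numden_Ratio ?oner_neq0 ?mulf_neq0 ?oner_neq0 ?denom_ratioP //.
by rewrite !mulr1 mulrC.
Qed.
End FracRep.

Section FracDer.
Variable R : idomainType.
Local Notation K := {fraction R}.
Local Notation "x %:F" := (@tofrac R x) (format "x %:F").

Lemma frac_repr (x : K) : x = ((repr x).1)%:F / ((repr x).2)%:F.
Proof.
rewrite -[x in LHS]reprK; set r := repr x.
have hq : (r.2)%:F != 0 by rewrite tofrac_eq0 denom_ratioP.
apply: (mulIf hq); rewrite mulfVK //.
unlock tofrac.
rewrite -[_ * _]FracField.pi_mul.
apply/eqmodP => /=. rewrite FracField.equivfE /FracField.mulf /=.
rewrite !numden_Ratio ?oner_neq0 ?mulf_neq0 ?oner_neq0 ?denom_ratioP //.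
by rewrite !mulr1 mulrC.
Qed.

Lemma repr_den_neq0 (x : K) : (repr x).2 != 0.
Proof. exact: denom_ratioP. Qed.

Lemma frac_eqE (a b c e : R) : b != 0 -> e != 0 ->
  (a%:F / b%:F == c%:F / e%:F) = (a * e == c * b).
Proof.
move=> hb he.
have hb' : b%:F != 0 by rewrite tofrac_eq0.
have he' : e%:F != 0 by rewrite tofrac_eq0.
by rewrite eqr_div // -(rmorphM (@tofrac R)) -(rmorphM (@tofrac R)) tofrac_eq.
Qed.

Variable d : R -> R.
Hypothesis dD : forall a b, d (a + b) = d a + d b.
Hypothesis dM : forall a b, d (a * b) = d a * b + a * d b.

Lemma d0 : d 0 = 0.
Proof. have h := dD 0 0; rewrite addr0 in h. by apply: (addrI (d 0)); rewrite addr0 -h. Qed.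
Lemma dN a : d (- a) = - d a.
Proof. by apply/eqP; rewrite -addr_eq0 -dD addNr d0. Qed.
Lemma dB a b : d (a - b) = d a - d b.
Proof. by rewrite dD dN. Qed.
Lemma d1 : d 1 = 0.
Proof. have h := dM 1 1; rewrite !mulr1 mul1r in h. by apply: (addrI (d 1)); rewrite addr0 -h. Qed.

Definition fder (x : K) : K :=
  let r := repr x in
  (d r.1 * r.2 - r.1 * d r.2)%:F / (r.2 * r.2)%:F.

Lemma fderE p q : q != 0 ->
  fder (p%:F / q%:F) = (d p * q - p * d q)%:F / (q * q)%:F.
Proof.
move=> hq; rewrite /fder.
set x := p%:F / q%:F; set r1 := (repr x).1; set r2 := (repr x).2.
have h2 : r2 != 0 := repr_den_neq0 x.
have E : r1 * q = p * r2.
  apply/eqP; rewrite -frac_eqE //; apply/eqP; exact: (esym (frac_repr x)).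
have E1 : d r1 * q + r1 * d q - (d p * r2 + p * d r2) = 0.
  by rewrite -!dM E subrr.
have E2 : r1 * q - p * r2 = 0 by rewrite E subrr.
apply/eqP; rewrite frac_eqE ?mulf_neq0 //; apply/eqP; apply/eqP.
rewrite -subr_eq0.
have -> : (d r1 * r2 - r1 * d r2) * (q * q) - (d p * q - p * d q) * (r2 * r2)
  = r2 * q * (d r1 * q + r1 * d q - (d p * r2 + p * d r2))
    - (q * d r2 + r2 * d q) * (r1 * q - p * r2) by ring.
by rewrite E1 E2 !mulr0 subrr.
Qed.

Lemma fder_tofrac a : fder a%:F = (d a)%:F.
Proof.
have := fderE a (oner_neq0 R); rewrite rmorph1 divr1 => ->.
by rewrite d1 !mulr1 mulr0 subr0 rmorph1 divr1.
Qed.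

Lemma addF a b c e : b != 0 -> e != 0 ->
  a%:F / b%:F + c%:F / e%:F = (a * e + c * b)%:F / (b * e)%:F.
Proof.
move=> hb he.
have hb' : b%:F != 0 by rewrite tofrac_eq0.
have he' : e%:F != 0 by rewrite tofrac_eq0.
by rewrite addf_div // rmorphD !rmorphM.
Qed.

Lemma mulF a b c e :
  a%:F / b%:F * (c%:F / e%:F) = (a * c)%:F / (b * e)%:F.
Proof. by rewrite !rmorphM /= invfM mulrACA. Qed.

Lemma fderD x y : fder (x + y) = fder x + fder y.
Proof.
rewrite (frac_repr x) (frac_repr y).
set p := (repr x).1; set q := (repr x).2; set p' := (repr y).1; set q' := (repr y).2.
have hq : q != 0 := repr_den_neq0 x. have hq' : q' != 0 := repr_den_neq0 y.
rewrite addF // !fderE ?mulf_neq0 // addF ?mulf_neq0 //.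
apply/eqP; rewrite frac_eqE ?mulf_neq0 //; apply/eqP.
rewrite dD !dM. ring.
Qed.

Lemma fderM x y : fder (x * y) = fder x * y + x * fder y.
Proof.
rewrite (frac_repr x) (frac_repr y).
set p := (repr x).1; set q := (repr x).2; set p' := (repr y).1; set q' := (repr y).2.
have hq : q != 0 := repr_den_neq0 x. have hq' : q' != 0 := repr_den_neq0 y.
rewrite mulF !fderE ?mulf_neq0 // !mulF addF ?mulf_neq0 //.
apply/eqP; rewrite frac_eqE ?mulf_neq0 //; apply/eqP.
rewrite !dM. ring.
Qed.
End FracDer.

Section FracDer2.
Variable R : idomainType.
Local Notation K := {fraction R}.
Local Notation "x %:F" := (@tofrac R x) (format "x %:F").
Variables d e : R -> R.
Hypothesis dD : forall a b, d (a + b) = d a + d b.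
Hypothesis dM : forall a b, d (a * b) = d a * b + a * d b.
Hypothesis eD : forall a b, e (a + b) = e a + e b.
Hypothesis eM : forall a b, e (a * b) = e a * b + a * e b.
Hypothesis de : forall a, d (e a) = e (d a).

Lemma fder_comm (x : K) : fder d (fder e x) = fder e (fder d x).
Proof.
rewrite (frac_repr x).
set p := (repr x).1; set q := (repr x).2.
have hq : q != 0 := repr_den_neq0 x.
rewrite !fderE ?mulf_neq0 //.
apply/eqP; rewrite frac_eqE ?mulf_neq0 //; apply/eqP.
rewrite ?(dB dD) ?(dB eD) ?dM ?eM ?de.
ring.
Qed.
End FracDer2.

Section PS.
Variable F : fieldType.

Record ps := PS { pscoef : nat -> F }.
HB.instance Definition _ := gen_eqMixin ps.
HB.instance Definition _ := gen_choiceMixin ps.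

Lemma psP (f g : ps) : (forall k, pscoef f k = pscoef g k) -> f = g.
Proof. by case: f => a; case: g => b h; congr PS; apply: funext => k; exact: h k. Qed.

Definition trunc (k : nat) (f : ps) : {poly F} := \poly_(i < k.+1) pscoef f i.
Definition truncp (k : nat) (A : {poly F}) : {poly F} := \poly_(i < k.+1) A`_i.

Lemma coef_trunc k f i : (trunc k f)`_i = if (i <= k)%N then pscoef f i else 0.
Proof. by rewrite coef_poly. Qed.

Lemma coef_truncp k A i : (truncp k A)`_i = if (i <= k)%N then A`_i else 0.
Proof. by rewrite coef_poly. Qed.

Lemma truncp_mul k (A B : {poly F}) : (A * B)`_k = (truncp k A * truncp k B)`_k.
Proof.
rewrite !coefM; apply: eq_bigr => i _.
rewrite !coef_truncp -ltnS ltn_ord /=.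
by rewrite (leq_trans (leq_subr _ _)) //.
Qed.

Lemma truncp_mull k (A B : {poly F}) : (truncp k A * B)`_k = (A * B)`_k.
Proof.
rewrite truncp_mul [RHS]truncp_mul.
suff -> : truncp k (truncp k A) = truncp k A by [].
by apply/polyP => i; rewrite !coef_truncp; case: (i <= k)%N.
Qed.

Lemma truncp_mulr k (A B : {poly F}) : (A * truncp k B)`_k = (A * B)`_k.
Proof. by rewrite mulrC truncp_mull mulrC. Qed.

Lemma truncp_trunc k j f : (j <= k)%N -> truncp j (trunc k f) = trunc j f.
Proof.
move=> hjk; apply/polyP => i; rewrite coef_truncp !coef_trunc.
by case: ifP => // hij; rewrite (leq_trans hij hjk).
Qed.

Definition ps0 := PS (fun _ => 0).
Definition psadd f g := PS (fun k => pscoef f k + pscoef g k).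
Definition psopp f := PS (fun k => - pscoef f k).
Definition ps1 := PS (fun k => (k == 0)%:R).
Definition psmul f g := PS (fun k => (trunc k f * trunc k g)`_k).

Lemma psaddA : associative psadd.
Proof. by move=> f g h; apply: psP => k /=; rewrite addrA. Qed.
Lemma psaddC : commutative psadd.
Proof. by move=> f g; apply: psP => k /=; rewrite addrC. Qed.
Lemma psadd0 : left_id ps0 psadd.
Proof. by move=> f; apply: psP => k /=; rewrite add0r. Qed.
Lemma psaddN : left_inverse ps0 psopp psadd.
Proof. by move=> f; apply: psP => k /=; rewrite addNr. Qed.

HB.instance Definition _ := GRing.isZmodule.Build ps psaddA psaddC psadd0 psaddN.

Lemma pscoefD f g k : pscoef (f + g) k = pscoef f k + pscoef g k.
Proof. by []. Qed.
Lemma pscoef0 k : pscoef 0 k = 0.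
Proof. by []. Qed.
Lemma pscoefN f k : pscoef (- f) k = - pscoef f k.
Proof. by []. Qed.

Lemma trunc_mul k f g : trunc k (psmul f g) = truncp k (trunc k f * trunc k g).
Proof.
apply/polyP => i; rewrite coef_truncp coef_trunc /=.
case: ifP => // hik.
by rewrite [RHS]truncp_mul !truncp_trunc.
Qed.

Lemma psmulA : associative psmul.
Proof.
move=> f g h; apply: psP => k /=.
by rewrite !trunc_mul truncp_mull truncp_mulr mulrA.
Qed.
Lemma psmulC : commutative psmul.
Proof. by move=> f g; apply: psP => k /=; rewrite mulrC. Qed.

Lemma trunc1 k : trunc k ps1 = 1.
Proof.
apply/polyP => i; rewrite coef_trunc coefC /=.
by case: i => [|i] //=; case: ifP.
Qed.

Lemma psmul1 : left_id ps1 psmul.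
Proof.
move=> f; apply: psP => k /=.
by rewrite trunc1 mul1r coef_trunc leqnn.
Qed.

Lemma trunc_add k f g : trunc k (psadd f g) = trunc k f + trunc k g.
Proof. by apply/polyP => i; rewrite coefD !coef_trunc /=; case: ifP; rewrite ?addr0. Qed.

Lemma psmulDl : left_distributive psmul psadd.
Proof.
move=> f g h; apply: psP => k /=.
by rewrite trunc_add mulrDl coefD.
Qed.

Lemma ps1_neq0 : ps1 != ps0.
Proof.
apply/eqP => h; have := congr1 (fun f => pscoef f 0) h => /=.
by move/eqP; rewrite oner_eq0.
Qed.

HB.instance Definition _ := GRing.Zmodule_isComNzRing.Build ps
  psmulA psmulC psmul1 psmulDl ps1_neq0.

Lemma pscoefM f g k : pscoef (f * g) k = \sum_(i < k.+1) pscoef f i * pscoef g (k - i).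
Proof.
rewrite /= coefM; apply: eq_bigr => i _.
rewrite !coef_trunc -ltnS ltn_ord.
by rewrite (leq_trans (leq_subr _ _)) //.
Qed.

Lemma pscoef1 k : pscoef 1 k = (k == 0)%:R.
Proof. by []. Qed.

Definition psunit : pred ps := fun f => `[< exists g, g * f = 1 >].
Definition psinv (f : ps) : ps :=
  match pselect (exists g, g * f = 1) with
  | left h => projT1 (cid h)
  | right _ => f
  end.

Lemma psmulV : {in psunit, left_inverse 1 psinv *%R}.
Proof.
move=> f hf; have /asboolP h : psunit f := hf.
rewrite /psinv; case: pselect => // h'; exact: (projT2 (cid h')).
Qed.

Lemma psunitPl : forall x y : ps, y * x = 1 -> psunit x.
Proof. by move=> x y h; apply/asboolP; exists y. Qed.

Lemma psinv_out : {in [predC psunit], psinv =1 id}.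
Proof.
move=> f hf; have h : ~~ psunit f := hf.
rewrite /psinv; case: pselect => // h'; case/negP: h; exact/asboolP.
Qed.

HB.instance Definition _ := GRing.ComNzRing_hasMulInverse.Build ps
  psmulV psunitPl psinv_out.

Lemma ps_neq0 (f : ps) : f != 0 -> exists k, pscoef f k != 0.
Proof.
move=> hf; case: (pselect (exists k, pscoef f k != 0)) => // hno.
case/eqP: hf; apply: psP => k; rewrite pscoef0; apply/eqP.
by apply/negPn/negP => hk; case: hno; exists k.
Qed.

Lemma ps_idomain : GRing.integral_domain_axiom ps.
Proof.
move=> f g hfg; apply/norP => -[hf hg].
have [i hi] := ps_neq0 hf; have [j hj] := ps_neq0 hg.
pose i0 := ex_minn (ex_intro (fun k => pscoef f k != 0) i hi).
pose j0 := ex_minn (ex_intro (fun k => pscoef g k != 0) j hj).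
case: (ex_minnP (ex_intro (fun k => pscoef f k != 0) i hi)) => a ha amin.
case: (ex_minnP (ex_intro (fun k => pscoef g k != 0) j hj)) => b hb bmin.
have := congr1 (fun h => pscoef h (a + b)) hfg.
rewrite pscoefM pscoef0.
have ha' : (a < (a + b).+1)%N by rewrite ltnS leq_addr.
rewrite (bigD1 (Ordinal ha')) //= addKn big1 ?addr0.
  by move/eqP; rewrite mulf_eq0 (negPf ha) (negPf hb).
move=> l hl.
have hl' : nat_of_ord l != a by apply: contra hl => /eqP hla; apply/eqP; apply: val_inj.
case: (ltngtP l a) => hla.
- have : pscoef f l == 0 by apply/negPn/negP => hnz; have := amin _ hnz; rewrite leqNgt hla.
  by move/eqP ->; rewrite mul0r.
- have hlt : (a + b - l < b)%N.
    have hlab : (l <= a + b)%N by rewrite -ltnS ltn_ord.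
    by rewrite ltn_subLR // ltn_add2r.
  have : pscoef g (a + b - l) == 0.
    by apply/negPn/negP => hnz; have := bmin _ hnz; rewrite leqNgt hlt.
  by move/eqP ->; rewrite mulr0.
- by move: hl'; rewrite hla eqxx.
Qed.

HB.instance Definition _ := GRing.ComUnitRing_isIntegral.Build ps ps_idomain.

End PS.

Section PSDer.
Variable F : fieldType.
Local Notation ps := (ps F).

Definition psd (d : F -> F) (f : ps) : ps := PS (fun k => d (pscoef f k)).
Definition pst (f : ps) : ps := PS (fun k => pscoef f k.+1 *+ k.+1).

Lemma pscoefMt (f g : ps) k : pscoef (f * g) k = (trunc k f * trunc k g)`_k.
Proof. by []. Qed.

Section D.
Variable d : F -> F.
Hypothesis dD : forall a b, d (a + b) = d a + d b.
Hypothesis dM : forall a b, d (a * b) = d a * b + a * d b.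

Lemma d0F : d 0 = 0.
Proof. have h := dD 0 0; rewrite addr0 in h. by apply: (addrI (d 0)); rewrite addr0 -h. Qed.

Lemma dsumF (I : Type) (r : seq I) (P : pred I) (E : I -> F) :
  d (\sum_(i <- r | P i) E i) = \sum_(i <- r | P i) d (E i).
Proof. exact: (big_morph d dD d0F). Qed.

Lemma dMnF a n : d (a *+ n) = d a *+ n.
Proof. by elim: n => [|n IH]; rewrite ?mulr0n ?d0F // !mulrS dD IH. Qed.

Lemma psdD f g : psd d (f + g) = psd d f + psd d g.
Proof. by apply: psP => k /=; rewrite dD. Qed.

Lemma psdM f g : psd d (f * g) = psd d f * g + f * psd d g.
Proof.
apply: psP => k; rewrite pscoefD; transitivity (d (pscoef (f * g) k)); first by [].
rewrite !pscoefM dsumF -big_split /=.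
by apply: eq_bigr => i _; rewrite dM.
Qed.
End D.

Lemma pstD f g : pst (f + g) = pst f + pst g.
Proof. by apply: psP => k /=; rewrite mulrnDl. Qed.

Lemma pstM f g : pst (f * g) = pst f * g + f * pst g.
Proof.
apply: psP => k; rewrite pscoefD.
transitivity (((trunc k.+1 f * trunc k.+1 g)^`())`_k).
  by rewrite coef_deriv.
rewrite derivM coefD.
have e1 : truncp k (trunc k.+1 f)^`() = trunc k (pst f).
  apply/polyP => i; rewrite coef_truncp coef_trunc coef_deriv coef_trunc /=.
  by rewrite ltnS; case: (i <= k)%N.
have e2 : truncp k (trunc k.+1 g)^`() = trunc k (pst g).
  apply/polyP => i; rewrite coef_truncp coef_trunc coef_deriv coef_trunc /=.
  by rewrite ltnS; case: (i <= k)%N.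
have e3 : truncp k (trunc k.+1 f) = trunc k f by rewrite truncp_trunc.
have e4 : truncp k (trunc k.+1 g) = trunc k g by rewrite truncp_trunc.
rewrite !pscoefMt [((trunc k.+1 f)^`() * _)`_k]truncp_mul [(trunc k.+1 f * _)`_k]truncp_mul.
by rewrite e1 e2 e3 e4.
Qed.
End PSDer.

Section PSC.
Variable F : fieldType.
Local Notation ps := (ps F).

Definition psC (a : F) : ps := PS (fun k => if k == 0%N then a else 0).

Lemma trunc_psC k a : trunc k (psC a) = a%:P.
Proof.
apply/polyP => i; rewrite coef_trunc coefC /=.
by case: i => [|i] //=; case: ifP.
Qed.

Lemma psC_zmod : zmod_morphism psC.
Proof. by move=> x y; apply: psP => k /=; case: ifP => //; rewrite subr0. Qed.

Lemma psC_monoid : monoid_morphism psC.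
Proof.
split; first by apply: psP => k /=; case: k.
move=> x y; apply: psP => k.
rewrite pscoefMt !trunc_psC -polyCM coefC /=.
by case: k.
Qed.

HB.instance Definition _ := GRing.isZmodMorphism.Build F ps psC psC_zmod.
HB.instance Definition _ := GRing.isMonoidMorphism.Build F ps psC psC_monoid.

Lemma pscoefCM a f k : pscoef (psC a * f) k = a * pscoef f k.
Proof.
rewrite pscoefM big_ord_recl /= subn0 big1 ?addr0 // => i _.
by rewrite /= mul0r.
Qed.

Lemma pscoef_sum (I : Type) (r : seq I) (P : pred I) (G : I -> ps) k :
  pscoef (\sum_(i <- r | P i) G i) k = \sum_(i <- r | P i) pscoef (G i) k.
Proof. by apply: (big_morph (fun f => pscoef f k)) => //. Qed.

Definition iotaK : F -> {fraction ps} := (@tofrac ps) \o psC.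
Lemma pstC a : pst (psC a) = 0.
Proof. by apply: psP => k /=; rewrite mul0rn. Qed.

Lemma psdC (d : F -> F) a : d 0 = 0 -> psd d (psC a) = psC (d a).
Proof. by move=> d0; apply: psP => k /=; case: ifP. Qed.
End PSC.

Section Ext.
Variables (n : nat) (F : fieldType) (D : 'I_n -> F -> F).
Hypothesis hD : diff_field D.
Variable i0 : 'I_n.
Local Notation ps := (ps F).
Local Notation K := {fraction ps}.

Definition psDer (j : 'I_n) (f : ps) : ps :=
  psd (D j) f + (if j == i0 then pst f else 0).

Lemma DD j a b : D j (a + b) = D j a + D j b.
Proof. by case: hD. Qed.
Lemma DM j a b : D j (a * b) = D j a * b + a * D j b.
Proof. by case: hD. Qed.
Lemma Dcomm j l a : D j (D l a) = D l (D j a).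
Proof. by case: hD. Qed.
Lemma D0 j : D j 0 = 0.
Proof. exact: d0F (DD j). Qed.

Lemma psDerD j f g : psDer j (f + g) = psDer j f + psDer j g.
Proof.
rewrite /psDer (psdD (DD j)); case: (j == i0).
  by rewrite pstD addrACA.
by rewrite !addr0.
Qed.

Lemma psDerM j f g : psDer j (f * g) = psDer j f * g + f * psDer j g.
Proof.
rewrite /psDer (psdM (DD j) (DM j)); case: (j == i0).
  by rewrite pstM mulrDl mulrDr addrACA.
by rewrite !addr0.
Qed.

Lemma psd_pst j f : psd (D j) (pst f) = pst (psd (D j) f).
Proof. by apply: psP => k /=; rewrite (dMnF (DD j)). Qed.

Lemma psd_comm j l f : psd (D j) (psd (D l) f) = psd (D l) (psd (D j) f).
Proof. by apply: psP => k /=; rewrite Dcomm. Qed.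

Lemma psDer_comm j l f : psDer j (psDer l f) = psDer l (psDer j f).
Proof.
rewrite /psDer.
case: (eqVneq j i0) => [->|hj]; case: (eqVneq l i0) => [->|hl] //;
  rewrite ?eqxx ?(negPf hj) ?(negPf hl) !addr0.
- by rewrite (psdD (DD _)) psd_comm psd_pst.
- by rewrite (psdD (DD _)) psd_comm psd_pst.
- by rewrite psd_comm.
Qed.

Definition DK (j : 'I_n) : K -> K := fder (psDer j).

Lemma DK_tofrac j f : DK j (tofrac f) = tofrac (psDer j f).
Proof. exact: fder_tofrac (@psDerM j) f. Qed.

Lemma DK_field : diff_field DK.
Proof.
split => [j a b|j a b|j l a].
- exact: fderD (@psDerD j) (@psDerM j) a b.
- exact: fderM (@psDerM j) a b.
- apply: fder_comm => //; [exact: psDerD|exact: psDerM|exact: psDerD|exact: psDerM|].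
  by move=> f; rewrite psDer_comm.
Qed.

Lemma DK_ext : diff_ext D DK (@iotaK F).
Proof.
split; first exact: DK_field.
move=> j a; rewrite /iotaK /= DK_tofrac; congr tofrac.
rewrite /psDer psdC ?D0 //; case: (j == i0); by rewrite ?pstC addr0.
Qed.
End Ext.

Section Dpow.
Variables (n : nat) (L : fieldType) (DL : 'I_n -> L -> L).

Lemma dpow0 a : dpow DL 0%MM a = a.
Proof.
rewrite /dpow; elim: (enum 'I_n) => [|i r IH] //=.
by rewrite mnm0E IH.
Qed.

Lemma dpow1 l a : dpow DL U_(l)%MM a = DL l a.
Proof.
rewrite /dpow.
have : uniq (enum 'I_n) := enum_uniq _.
have : l \in enum 'I_n := mem_enum _ l.
elim: (enum 'I_n) => [|i r IH] //= hl /andP[hi hr].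
rewrite mnm1E; case: (eqVneq l i) => [eli|hli] /=.
  subst i.
  suff -> : foldr (fun i0 x => iter (U_(l)%MM i0) (DL i0) x) a r = a by [].
  elim: r hi {IH hr hl} => [|j r IH] //=; rewrite inE negb_or => /andP[hj hr].
  by rewrite mnm1E (negPf hj) /= IH.
rewrite IH //; move: hl; rewrite inE => /orP[/eqP h|//].
by rewrite h eqxx in hli.
Qed.
End Dpow.

Section Sys.
Variables (n : nat) (F : fieldType).
Variables (a : 'I_n -> F) (kappa rho hm xm : F).

Definition vsys (j : 'I_n.+1) : 'I_1 * 'X_{1..n} :=
  (ord0, if unlift ord0 j is Some l then U_(l)%MM else 0%MM).

Definition psys : {mpoly F[n.+1]} :=
  \sum_(l < n) a l *: 'X_(lift ord0 l) + kappa *: 'X_ord0 - rho%:MP.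
Definition qsys : {mpoly F[n.+1]} := hm%:MP + xm *: 'X_ord0.

Variables (L : fieldType) (DL : 'I_n -> L -> L) (f : {rmorphism F -> L}) (u : 'I_1 -> L).

Lemma mapmD (p q : {mpoly F[n.+1]}) : map_mpoly f (p + q) = map_mpoly f p + map_mpoly f q.
Proof. exact: raddfD. Qed.
Lemma mapmB (p q : {mpoly F[n.+1]}) : map_mpoly f (p - q) = map_mpoly f p - map_mpoly f q.
Proof. exact: raddfB. Qed.
Lemma mapm_sum (G : 'I_n -> {mpoly F[n.+1]}) :
  map_mpoly f (\sum_(l < n) G l) = \sum_(l < n) map_mpoly f (G l).
Proof. exact: raddf_sum. Qed.

Lemma mev_sum (w : 'I_n.+1 -> L) (G : 'I_n -> {mpoly L[n.+1]}) :
  (\sum_(l < n) G l).@[w] = \sum_(l < n) (G l).@[w].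
Proof. exact: raddf_sum. Qed.

Let val_ j := dpow DL (vsys j).2 (u (vsys j).1).

Lemma val0 : val_ ord0 = u ord0.
Proof.
rewrite /val_ /vsys /=.
have -> : unlift (@ord0 n) ord0 = None by apply/unlift_none.
by rewrite dpow0.
Qed.

Lemma val_lift l : val_ (lift ord0 l) = DL l (u ord0).
Proof.
rewrite /val_ /vsys /= liftK dpow1.
by congr (DL l (u _)); apply/val_inj; case: ord0.
Qed.

Lemma eval_psys : (map_mpoly f psys).@[val_] =
  \sum_(l < n) f (a l) * DL l (u ord0) + f kappa * u ord0 - f rho.
Proof.
rewrite /psys mapmB mapmD mapm_sum map_mpolyC.
rewrite mevalB mevalD mevalC mev_sum map_mpolyZ map_mpolyX mevalZ mevalXU val0.
congr (_ + _ - _); apply: eq_bigr => l _.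
by rewrite map_mpolyZ map_mpolyX mevalZ mevalXU val_lift.
Qed.

Lemma eval_qsys : (map_mpoly f qsys).@[val_] = f hm + f xm * u ord0.
Proof.
rewrite /qsys mapmD map_mpolyC map_mpolyZ map_mpolyX.
by rewrite mevalD mevalC mevalZ mevalXU val0.

Qed.
End Sys.

Section Sol.
Variables (n : nat) (F : fieldType) (D : 'I_n -> F -> F).
Hypothesis hD : diff_field D.
Hypothesis hchar : [pchar F] =i pred0.
Variables (i0 : 'I_n) (a : 'I_n -> F) (kappa rho c0 : F).
Hypothesis ha : a i0 != 0.

Fixpoint ycoef (k : nat) : F :=
  match k with
  | 0 => c0
  | k'.+1 => (rho * (k' == 0%N)%:R - kappa * ycoef k'
              - \sum_(l < n) a l * D l (ycoef k')) / (a i0 * k'.+1%:R)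
  end.

Definition ys : ps F := PS ycoef.

Lemma pscoef_psDer l f k : pscoef (psDer D i0 l f) k =
  D l (pscoef f k) + (if l == i0 then pscoef f k.+1 *+ k.+1 else 0).
Proof. by rewrite /psDer pscoefD; case: (l == i0). Qed.

Lemma natk_neq0 k : (k.+1%:R : F) != 0.
Proof. by have /pcharf0P -> := hchar. Qed.

Lemma ys_eq : \sum_(l < n) psC (a l) * psDer D i0 l ys + psC kappa * ys = psC rho.
Proof.
apply: psP => k; rewrite pscoefD pscoef_sum pscoefCM.
under eq_bigr => l _ do rewrite pscoefCM pscoef_psDer mulrDr.
rewrite big_split /=.
set S := \sum_(i < n) a i * D i (ycoef k).
rewrite (bigD1 i0) //= eqxx big1 ?addr0; last first.
  by move=> l /negPf ->; rewrite mulr0.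
rewrite -mulr_natr.
have hk := natk_neq0 k.
have -> : (if k == 0%N then rho else 0) = rho * (k == 0%N)%:R by case: (k == 0%N); rewrite ?mulr1 ?mulr0.
field. by rewrite ha andbT nat1r.
Qed.
End Sol.

Section Exist.
Variables (n : nat) (F : fieldType) (D : 'I_n -> F -> F).
Hypothesis hD : diff_field D.
Hypothesis hchar : [pchar F] =i pred0.
Hypothesis hclosed : diff_closed D.
Variables (i0 : 'I_n) (a : 'I_n -> F) (kappa rho : F).
Hypothesis ha : a i0 != 0.

Lemma map_mpoly_id k (p : {mpoly F[k]}) : map_mpoly id p = map_mpoly (idfun : F -> F) p.
Proof. by []. Qed.

Lemma exists_alpha (hm xm : F) : xm != 0 ->
  exists alpha : F, \sum_(l < n) a l * D l alpha + kappa * alpha = rho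
                    /\ hm + xm * alpha != 0.
Proof.
move=> hxm.
pose c0 := (1 - hm) / xm.
pose y := tofrac (ys D i0 a kappa rho c0).
have [|u [hp hq]] := @hclosed 1 n.+1 (@vsys n) [:: psys a kappa rho] [:: qsys n hm xm].
  exists {fraction ps F}, (DK D i0), (@iotaK F), (fun _ => y).
  split; first exact: DK_ext.
  split => p; rewrite inE => /eqP ->.
    have := eval_psys a kappa rho (DK D i0) (@iotaK F) (fun _ => y).
    move=> /= ->.
    apply/eqP; rewrite subr_eq0; apply/eqP.
    transitivity (tofrac (\sum_(l < n) psC (a l) * psDer D i0 l (ys D i0 a kappa rho c0)
                          + psC kappa * ys D i0 a kappa rho c0)); last first.
      by rewrite ys_eq.
    rewrite rmorphD rmorph_sum rmorphM /=; congr (_ + _).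
    by apply: eq_bigr => l _; rewrite rmorphM /= DK_tofrac.
  have := eval_qsys hm xm (DK D i0) (@iotaK F) (fun _ => y).
  move=> /= ->.
  rewrite /y /iotaK /= -!rmorphM -rmorphD /= tofrac_eq0.
  apply/eqP => /(congr1 (fun f => pscoef f 0)).
  rewrite pscoefD pscoefCM /= /c0 mulrC divfK // addrC subrK.
  by apply/eqP; rewrite oner_eq0.
move: (hp _ (mem_head _ _)) (hq _ (mem_head _ _)).
rewrite !map_mpoly_id.
have := eval_psys a kappa rho D (idfun : {rmorphism F -> F}) u.
have := eval_qsys hm xm D (idfun : {rmorphism F -> F}) u.
move=> /= -> -> h1 h2; exists (u ord0); split => //.
by apply/eqP; rewrite -subr_eq0 h1.
Qed.
End Exist.

Section Mnm.
Variable n : nat.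

Lemma lem0 (d : 'X_{1..n}) : (d <= 0)%MM -> d = 0%MM.
Proof.
move/mnm_lepP => h; apply/mnmP => i; rewrite mnm0E.
by apply/eqP; rewrite -leqn0 -(mnm0E i) h.
Qed.

Lemma lem1 (d : 'X_{1..n}) l : (d <= U_(l))%MM -> d = 0%MM \/ d = U_(l)%MM.
Proof.
move/mnm_lepP => h.
case: (eqVneq (d l) 0%N) => hl.
  left; apply/mnmP => i; rewrite mnm0E.
  case: (eqVneq i l) => [->//|hil].
  by apply/eqP; rewrite -leqn0; have := h i; rewrite mnm1E eq_sym (negPf hil).
right; apply/mnmP => i; rewrite mnm1E.
case: (eqVneq l i) => [<-|hli] /=.
  by apply/eqP; rewrite eqn_leq; have := h l; rewrite mnm1E eqxx => -> /=; rewrite lt0n.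
by apply/eqP; rewrite -leqn0; have := h i; rewrite mnm1E (negPf hli).
Qed.

Variable V : nmodType.

Lemma bsum0 (G : 'X_{1..n} -> V) :
  \sum_(d : 'X_{1..n < (mdeg (0%MM : 'X_{1..n})).+1} | (val d <= 0)%MM) G (val d) = G 0%MM.
Proof.
rewrite (bigD1 bm0) /=; last exact: lepm_refl.
rewrite big1 ?addr0 // => d /andP[/lem0 hd hne].
by case/eqP: hne; apply: val_inj; rewrite /= hd.
Qed.

Lemma bU_proof l : (mdeg (U_(l) : 'X_{1..n}) < (mdeg (U_(l) : 'X_{1..n})).+1)%N.
Proof. exact: ltnSn. Qed.

Lemma bsum1 l (G : 'X_{1..n} -> V) :
  \sum_(d : 'X_{1..n < (mdeg (U_(l) : 'X_{1..n})).+1} | (val d <= U_(l))%MM) G (val d)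
  = G 0%MM + G U_(l)%MM.
Proof.
have h0 : (bmnm (@bm0 n (mdeg (U_(l) : 'X_{1..n}))) <= U_(l))%MM.
  by apply/mnm_lepP => i; rewrite mnm0E.
rewrite (bigD1 bm0) //=.
pose bU := BMultinom (bU_proof l).
rewrite (bigD1 bU) /=; last first.
  rewrite lepm_refl /=; apply/eqP => /(congr1 val) /= h.
  by have := mnm1_eq0 l; rewrite h eqxx.
rewrite big1 ?addr0 // => d /andP[/andP[/lem1 [hd|hd] hne0] hneU].
  by case/eqP: hne0; apply: val_inj; rewrite /= hd.
by case/eqP: hneU; apply: val_inj; rewrite /= hd.
Qed.
End Mnm.

Section Op.
Variables (n : nat) (F : fieldType) (D : 'I_n -> F -> F).
Hypothesis hD : diff_field D.

Definition Dq (l : 'I_n) (Q : {mpoly F[n]}) : {mpoly F[n]} :=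
  \sum_(m <- msupp Q) D l Q@_m *: 'X_[m].

Lemma submm (m : 'X_{1..n}) : (m - m)%MM = 0%MM.
Proof. by apply/mnmP => i; rewrite mnmBE mnm0E subnn. Qed.

Lemma sum_coef_ind (P : {mpoly F[n]}) k :
  \sum_(m <- msupp P) (m == k)%:R * P@_m = P@_k.
Proof.
rewrite [in RHS](mpolyE P) raddf_sum /=.
by apply: eq_bigr => m _; rewrite mcoeffZ mcoeffX mulrC.
Qed.

Lemma prodC0 (m : 'X_{1..n}) : (\prod_(i < n) 'C(m i, (0%MM : 'X_{1..n}) i))%N = 1%N.
Proof. by rewrite big1 // => i _; rewrite mnm0E bin0. Qed.

Lemma prodCmm (m : 'X_{1..n}) : (\prod_(i < n) 'C(m i, m i))%N = 1%N.
Proof. by rewrite big1 // => i _; rewrite binn. Qed.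

Lemma inner_first (P Q : {mpoly F[n]}) m m' : (mdeg m <= 1)%N ->
  \sum_(d : 'X_{1..n < (mdeg m).+1} | (val d <= m)%MM)
      ((\prod_(i < n) 'C(m i, val d i))%:R * P@_m * dpow D (val d) Q@_m')
        *: 'X_[(m - val d + m')%MM]
  = (P@_m * Q@_m') *: 'X_[m + m']
    + \sum_(l < n) ((m == U_(l)%MM)%:R * P@_m * D l Q@_m') *: 'X_[m'].
Proof.
rewrite leq_eqVlt ltnS leqn0 => /orP[/mdeg1P [l /eqP ->]|].
  have := bsum1 l (fun d => ((\prod_(i < n) 'C(U_(l)%MM i, d i))%:R * P@_U_(l) *
             dpow D d Q@_m') *: 'X_[(U_(l) - d + m')%MM]).
  move=> /= ->.
  rewrite prodC0 prodCmm.
  rewrite (bigD1 l) //= ?eqxx big1 ?addr0; last first.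
    by move=> j hj; rewrite eq_mnm1 eq_sym (negPf hj) mul0r mul0r scale0r.
  by rewrite dpow0 dpow1 subm0 submm add0m !mul1r.
rewrite mdeg_eq0 => /eqP ->.
have := bsum0 (fun d => ((\prod_(i < n) 'C((0%MM : 'X_{1..n}) i, d i))%:R * P@_0%MM *
             dpow D d Q@_m') *: 'X_[(0%MM - d + m')%MM]).
move=> /= ->.
rewrite prodC0 big1 ?addr0; last first.
  by move=> j _; rewrite eq_sym mnm1_eq0 !mul0r scale0r.
by rewrite dpow0 subm0 !mul1r.
Qed.

Lemma opmul_first (P Q : {mpoly F[n]}) : (msize P <= 2)%N ->
  opmul D P Q = P * Q + \sum_(l < n) P@_U_(l) *: Dq l Q.
Proof.
move=> hP; rewrite /opmul.
rewrite (eq_big_seq (fun m => \sum_(m' <- msupp Q)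
   ((P@_m * Q@_m') *: 'X_[m + m']
    + \sum_(l < n) ((m == U_(l)%MM)%:R * P@_m * D l Q@_m') *: 'X_[m']))); last first.
  move=> m hm; apply: eq_bigr => m' _; apply: inner_first.
  by have h := msize_mdeg_lt hm; rewrite -ltnS (leq_trans h hP).
under eq_bigr do rewrite big_split /=.
rewrite big_split /=; congr (_ + _).
  by rewrite mpolyME big_allpairs.
under eq_bigr do rewrite exchange_big /=.
rewrite exchange_big /=; apply: eq_bigr => l _.
rewrite /Dq scaler_sumr exchange_big /=; apply: eq_bigr => m' _.
rewrite scalerA -scaler_suml; congr (_ *: _).
by rewrite -mulr_suml sum_coef_ind.
Qed.
End Op.

Section Fo.
Variables (n : nat) (F : fieldType) (D : 'I_n -> F -> F).
Hypothesis hD : diff_field D.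

Definition fo (P : {mpoly F[n]}) := forall m, P@_m != 0 -> (mdeg m <= 1)%N.

Lemma foP P : fo P <-> (msize P <= 2)%N.
Proof.
split => h.
  rewrite msizeE; apply/bigmax_leqP_seq => m hm _.
  by rewrite ltnS; apply: h; rewrite -mcoeff_msupp.
move=> m hm; have := msize_mdeg_lt (m := m) (p := P).
by rewrite mcoeff_msupp hm => /(_ isT) hl; rewrite -ltnS (leq_trans hl h).
Qed.

Lemma foD P Q : fo P -> fo Q -> fo (P + Q).
Proof.
move=> hP hQ m; rewrite mcoeffD => h.
case: (eqVneq P@_m 0) => hp; last exact: hP.
by apply: hQ; move: h; rewrite hp add0r.
Qed.

Lemma foZ c P : fo P -> fo (c *: P).
Proof. by move=> hP m; rewrite mcoeffZ mulf_eq0 negb_or => /andP[_]; apply: hP. Qed.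

Lemma foC c : fo (c%:MP).
Proof.
move=> m; rewrite mcoeffC; case: (eqVneq m 0%MM) => [->|hm]; first by rewrite mdeg0.
by rewrite mulr0 eqxx.
Qed.

Lemma foN P : fo P -> fo (- P).
Proof. by move=> hP m; rewrite mcoeffN oppr_eq0; apply: hP. Qed.

Lemma mcoeff_Dq l Q k : (Dq D l Q)@_k = D l Q@_k.
Proof.
have D0 : D l 0 = 0 by case: hD => hDD _ _; exact: d0F (hDD l).
rewrite /Dq raddf_sum /=.
under eq_bigr do rewrite mcoeffZ mcoeffX.
case: (boolP (k \in msupp Q)) => hk.
  rewrite (bigD1_seq k) ?msupp_uniq //= eqxx mulr1 big1 ?addr0 // => m hm.
  by rewrite (negPf hm) mulr0.
rewrite big1_seq; last first.
  move=> m /andP[_ hm]; case: eqP => [e|_]; last by rewrite mulr0.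
  by rewrite -e hm in hk.
by move: hk; rewrite mcoeff_msupp negbK => /eqP ->; rewrite D0.
Qed.

Lemma foDq l Q : fo Q -> fo (Dq D l Q).
Proof.
have D0 : D l 0 = 0 by case: hD => hDD _ _; exact: d0F (hDD l).
move=> hQ m; rewrite mcoeff_Dq => h; apply: hQ; apply: contra h => /eqP ->.
by rewrite D0.
Qed.
End Fo.


Section DqLemmas.
Variables (n : nat) (F : fieldType) (D : 'I_n -> F -> F).
Hypothesis hD : diff_field D.

Lemma DqD l P Q : Dq D l (P + Q) = Dq D l P + Dq D l Q.
Proof. by apply/mpolyP => m; rewrite mcoeffD !mcoeff_Dq // mcoeffD; case: hD. Qed.

Lemma DqZ l c P : Dq D l (c *: P) = D l c *: P + c *: Dq D l P.
Proof.
apply/mpolyP => m; rewrite mcoeffD !mcoeffZ !mcoeff_Dq // mcoeffZ.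
by case: hD => _ hM _; rewrite hM.
Qed.

Lemma DqC l c : Dq D l c%:MP = (D l c)%:MP.
Proof.
apply/mpolyP => m; rewrite mcoeff_Dq // !mcoeffC.
case: hD => hA hM _; rewrite hM.
have -> : D l (m == 0%MM)%:R = 0.
  case: (m == 0%MM).
    by have := hM l 1 1; rewrite !mulr1 mul1r => h; apply: (addrI (D l 1)); rewrite addr0 -h.
  exact: d0F (hA l).
by rewrite mulr0 addr0.
Qed.

Lemma foL (P Q : {mpoly F[n]}) : (msize P <= 2)%N ->
  opmul D P Q = P * Q + \sum_(l < n) P@_U_(l) *: Dq D l Q.
Proof. exact: opmul_first. Qed.
End DqLemmas.

Close Scope quotient_scope.
Unset Implicit Arguments.
Set Strict Implicit.

Theorem theorem2 (n : nat) (F : fieldType) (D : 'I_n -> F -> F)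
  (hchar : [pchar F] =i pred0)
  (hD : diff_field D) (hclosed : diff_closed D)
  (X1 X2 H : {mpoly F[n]}) (kappa rho : F)
  (hX1 : first_order X1) (hX2 : first_order X2) (hH : first_order H)
  (hL2 : op_order (opmul D X1 X2 - H) = 2%N)
  (hLdec : decomposable_symbol (opmul D X1 X2 - H))
  (hDini : admits_Dini D X2 H kappa rho) :
  exists alpha : F,
    let tX1 := X1 + alpha%:MP in
    let tH := H + alpha *: X2 in
    let psi := kappa in
    [/\ opmul D tX1 X2 - tH = opmul D X1 X2 - H,
        opcomm D tH X2 = psi *: tH,
        ILT_with D X2 tH psi%:MP &
        ILT_result D tX1 X2 tH psi%:MP = Dini_result D X1 X2 H kappa rho].
Proof.
have fX1 : fo X1 by apply/foP.
have fX2 : fo X2 by apply/foP.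
have fH : fo H by apply/foP.
have D0 : forall l, D l 0 = 0 by case: hD => hA _ _ l; exact: d0F (hA l).
have fsum : forall (G : 'I_n -> {mpoly F[n]}), (forall l, fo (G l)) -> fo (\sum_(l < n) G l).
  move=> G hG; elim/big_ind: _ => //; [exact: foC 0|exact: foD].
case: (boolP [exists l : 'I_n, X2@_U_(l) != 0]) => [/existsP [i0 hi0]|hno]; last first.
  exfalso.
  have eX2 : X2 = (X2@_0%MM)%:MP.
    apply/mpolyP => m; rewrite mcoeffC.
    case: (eqVneq m 0%MM) => [->|hm]; first by rewrite mulr1.
    rewrite mulr0; apply/eqP; apply/negP => /negP hX.
    have := fX2 _ hX; rewrite leq_eqVlt ltnS leqn0 mdeg_eq0 (negPf hm) orbF.
    case/mdeg1P => l /eqP el; move/negP: hno; apply; apply/existsP; exists l.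
    by rewrite -el.
  have : fo (opmul D X1 X2 - H).
    rewrite foL; last by apply/foP.
    apply: foD; last exact: foN.
    apply: foD.
      by rewrite eX2 mulrC mul_mpolyC; apply: foZ.
    apply: fsum => l; apply: foZ; rewrite eX2 DqC //; exact: foC.
  move/foP; rewrite /op_order in hL2.
  by case: (msize _) hL2 => [|[|[|k]]] //.
set a := fun l => X2@_U_(l).
have [alpha [hal hne]] := exists_alpha hD hchar hclosed (a := a) kappa rho hi0 (H@_U_(i0)) hi0.
exists alpha => tX1 tH psi.
have cC : forall c l, (c%:MP : {mpoly F[n]})@_U_(l) = 0.
  by move=> c l; rewrite mcoeffC mnm1_eq0 mulr0.
have ftX1 : (msize tX1 <= 2)%N by apply/foP; apply: foD => //; exact: foC.
have ftH : (msize tH <= 2)%N by apply/foP; apply: foD => //; exact: foZ.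
have fk : (msize (kappa%:MP : {mpoly F[n]}) <= 2)%N by apply/foP; exact: foC.
have fX1' : (msize X1 <= 2)%N by [].
have fX2' : (msize X2 <= 2)%N by [].
have fH' : (msize H <= 2)%N by [].
set X := \sum_(l < n) a l * D l alpha.
have erho : rho%:MP = X%:MP + kappa%:MP * alpha%:MP :> {mpoly F[n]}.
  by rewrite -hal rmorphD rmorphM.
have sZ : forall c (P : {mpoly F[n]}), c *: P = c%:MP * P by move=> c P; rewrite mul_mpolyC.
have g1 : opmul D tX1 X2 - tH = opmul D X1 X2 - H.
  rewrite (foL D (P:=tX1)) // (foL D (P:=X1)) //.
  under eq_bigr do rewrite mcoeffD cC addr0.
  rewrite /tX1 /tH !sZ. ring.
have g2 : opcomm D tH X2 = psi *: tH.
  move: hDini; rewrite /admits_Dini /opcomm (foL D (P:=tH)) // (foL D (P:=X2) tH) // (foL D (P:=X2) H) // (foL D (P:=H)) //.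
  rewrite /tH.
  have -> : \sum_(l < n) (H + alpha *: X2)@_U_(l) *: Dq D l X2
     = \sum_(l < n) H@_U_(l) *: Dq D l X2 + alpha *: \sum_(l < n) X2@_U_(l) *: Dq D l X2.
    rewrite scaler_sumr -big_split /=; apply: eq_bigr => l _.
    by rewrite mcoeffD mcoeffZ scalerDl scalerA.
  have -> : \sum_(l < n) X2@_U_(l) *: Dq D l (H + alpha *: X2)
     = \sum_(l < n) X2@_U_(l) *: Dq D l H + X *: X2
       + alpha *: \sum_(l < n) X2@_U_(l) *: Dq D l X2.
    rewrite /X scaler_suml scaler_sumr -!big_split /=; apply: eq_bigr => l _.
    rewrite (DqD hD) (DqZ hD) !scalerDr !scalerA addrA; congr (_ + _ + _).
    by rewrite mulrC.
  set SH := \sum_(l < n) H@_U_(l) *: Dq D l X2.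
  set T := \sum_(l < n) X2@_U_(l) *: Dq D l H.
  set S2 := \sum_(l < n) X2@_U_(l) *: Dq D l X2.
  move=> hDi.
  rewrite /psi !sZ.
  have hDi' : H * X2 + SH - (X2 * H + T) = kappa%:MP * H + rho%:MP * X2.
    by rewrite hDi !sZ.
  transitivity ((H * X2 + SH - (X2 * H + T)) - X%:MP * X2).
    ring.
  rewrite hDi' erho. ring.
have htH : tH != 0.
  apply/eqP => h; move: hne; rewrite mulrC.
  by have := congr1 (mcoeff U_(i0)) h; rewrite mcoeffD mcoeffZ mcoeff0 => ->; rewrite eqxx.
have g3 : ILT_with D X2 tH psi%:MP.
  split => //.
  rewrite /opcomm opprB -/(opcomm D tH X2) g2 (foL D (P:=psi%:MP)) //.
  rewrite big1 ?addr0 ?sZ // => l _; by rewrite cC scale0r.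
have g4 : ILT_result D tX1 X2 tH psi%:MP = Dini_result D X1 X2 H kappa rho.
  rewrite /ILT_result /Dini_result (foL D (P:=X2) tX1) // (foL D (P:=X2) X1) //.
  rewrite (foL D (P:=psi%:MP)) //.
  have -> : \sum_(l < n) (psi%:MP : {mpoly F[n]})@_U_(l) *: Dq D l tX1 = 0.
    by apply: big1 => l _; rewrite cC scale0r.
  rewrite addr0.
  have -> : \sum_(l < n) X2@_U_(l) *: Dq D l tX1
      = \sum_(l < n) X2@_U_(l) *: Dq D l X1 + X%:MP.
    rewrite /X rmorph_sum -big_split /=; apply: eq_bigr => l _.
    by rewrite /tX1 (DqD hD) (DqC hD) scalerDr rmorphM /= mul_mpolyC.
  set T1 := \sum_(l < n) X2@_U_(l) *: Dq D l X1.
  rewrite /tX1 /tH /psi !sZ erho. ring.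
by split.
Qed.
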